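(* For $k\in\{0,1,2\}$ let $U_k=\begin{pmatrix}\cos(2k\pi/3)&-\sin(2k\pi/3)\\ \sin(2k\pi/3)&\cos(2k\pi/3)\end{pmatrix}$, let $|+\rangle=(1,0)$, $|-\rangle=(0,1)$. For $\lambda\in(0,1)$ define the POVM $\mathsf E^\lambda$ by $E^\lambda_k=\lambda\,\tfrac23U_k|+\rangle\langle+|U_k^*+(1-\lambda)\tfrac13\mathbb 1$, and for $\eta\in[0,1]$ define $\mathsf B^\eta$ by $B^\eta_k=U_kB^\eta_0U_k^*$ with $B^\eta_0=\eta\,\tfrac23|-\rangle\langle-|+(1-\eta)\tfrac13\mathbb 1$. If $$\eta\le \frac{\lambda^2}{2\left(1-\sqrt{1-\lambda^2}\right)},$$ then $\mathsf E^\lambda$ and $\mathsf B^\eta$ are jointly measurable. In particular, for $\eta=\lambda$ they are jointly measurable whenever $\lambda\le 4/5$.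
   Context: Two POVMs $(E_k)_{k=0}^2$, $(B_j)_{j=0}^2$ on $\mathbb C^2$ are jointly measurable if there is a POVM $(N_{kj})$ with $\sum_jN_{kj}=E_k$ and $\sum_kN_{kj}=B_j$. *)

(* Defs.v *)
From HB Require Import structures.
From mathcomp Require Import all_boot all_order all_algebra.
From mathcomp Require Import all_classical all_reals.
From mathcomp Require Import trigo.
From mathcomp.real_closed Require Import complex.

Set Implicit Arguments. Unset Strict Implicit. Unset Printing Implicit Defensive.
Import Order.TTheory GRing.Theory Num.Theory.
Local Open Scope ring_scope.
Local Open Scope complex_scope.

Section Qubit.
Variable R : realType.
Local Notation C := R[i].

Definition adj (m n : nat) (A : 'M[C]_(m, n)) : 'M[C]_(n, m) :=
  (map_mx Num.conj A)^T.

Definition psd (A : 'M[C]_2) : Prop :=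
  forall v : 'cV[C]_2, 0 <= (adj v *m A *m v) 0 0.

Definition POVM (I : finType) (E : I -> 'M[C]_2) : Prop :=
  (forall i, psd (E i)) /\ \sum_(i : I) E i = 1%:M.

Definition jointly_measurable (E B : 'I_3 -> 'M[C]_2) : Prop :=
  exists N : 'I_3 * 'I_3 -> 'M[C]_2,
    POVM N /\
    (forall k : 'I_3, \sum_(j : 'I_3) N (k, j) = E k) /\
    (forall j : 'I_3, \sum_(k : 'I_3) N (k, j) = B j).

Definition cmx (m n : nat) (A : 'M[R]_(m, n)) : 'M[C]_(m, n) :=
  map_mx (fun x => x%:C) A.

Definition U (k : 'I_3) : 'M[C]_2 :=
  let t := (2 * k%:R * pi / 3 : R) in
  cmx (\matrix_(i < 2, j < 2)
         if (i == 0) && (j == 0) then cos t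
         else if (i == 0) && (j == 1) then - sin t
         else if (i == 1) && (j == 0) then sin t
         else cos t).

Definition ketp : 'cV[C]_2 := \col_(i < 2) (if i == 0 then 1 else 0).
Definition ketm : 'cV[C]_2 := \col_(i < 2) (if i == 0 then 0 else 1).

Definition Elam (lam : R) (k : 'I_3) : 'M[C]_2 :=
  (lam * 2 / 3)%:C *: (U k *m ketp *m adj ketp *m adj (U k))
  + ((1 - lam) / 3)%:C *: 1%:M.

Definition B0 (eta : R) : 'M[C]_2 :=
  (eta * 2 / 3)%:C *: (ketm *m adj ketm) + ((1 - eta) / 3)%:C *: 1%:M.

Definition Beta (eta : R) (k : 'I_3) : 'M[C]_2 :=
  U k *m B0 eta *m adj (U k).

End Qubit.

(* Main.v *)
Require Import Defs.
From HB Require Import structures.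
From mathcomp Require Import all_boot all_order all_algebra.
From mathcomp Require Import all_classical all_reals.
From mathcomp Require Import trigo.
From mathcomp.real_closed Require Import complex.
From mathcomp Require Import ring lra.
Set Implicit Arguments. Unset Strict Implicit. Unset Printing Implicit Defensive.
Import Order.TTheory GRing.Theory Num.Theory.
Local Open Scope ring_scope.
Local Open Scope complex_scope.

Definition r3 (R : realType) : R := sin (pi / 3).

Lemma cos_pi3 (R : realType) : cos (pi / 3) = 1 / 2 :> R.
Proof.
set th := pi / 3.
have hpi : (pi : R) = th + th + th by rewrite /th; field.
have E := @cospi R; rewrite hpi !cosD !sinD in E.
have hs := sin2cos2 th.
set c := cos th in E hs *; set s := sin th in E hs *.
have h1 : (c+1)*(2*c-1)^+2 = ((c*c - s*s)*c - (s*c+c*s)*s) + 1 + 3*c*(s^+2 - (1 - c^+2)) by ring.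
rewrite E hs subrr mulr0 addr0 addNr in h1.
have cpos : 0 < c.
  apply: cos_gt0_pihalf; have := @pi_gt0 R; rewrite /th => hp; apply/andP; split; lra.
move/eqP: h1; rewrite mulf_eq0 => /orP [|]; first by move=> /eqP h; lra.
rewrite sqrf_eq0 => /eqP h; lra.
Qed.

Lemma r3_sq (R : realType) : (r3 R)^+2 = 3 / 4.
Proof. rewrite /r3 sin2cos2 cos_pi3. by field. Qed.

Definition ck (R : realType) (k : 'I_3) : R := if (k : nat) == 0%N then 1 else -1/2.
Definition sk (R : realType) (k : 'I_3) : R :=
  if (k : nat) == 0%N then 0 else if (k : nat) == 1%N then r3 R else - r3 R.

Lemma cs_vals (R : realType) (k : 'I_3) :
  cos (2 * k%:R * pi / 3) = ck R k /\ sin (2 * k%:R * pi / 3) = sk R k.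
Proof.
have hc := @cos_pi3 R; have hs := @r3_sq R.
case: k => [[|[|[|//]]] Hk]; rewrite /ck /sk /=.
- by rewrite mulr0 mul0r mul0r cos0 sin0.
- have -> : (2 * 1%:R * pi / 3 : R) = pi / 3 + pi / 3 by field.
  rewrite cosD sinD hc -/(r3 R); split; last by field.
  rewrite -[r3 R * r3 R]expr2 hs; by field.
- rewrite (_ : (2 * _ * pi / 3 : R) = pi / 3 + pi); last by field.
  split; [rewrite cosDpi hc; by field | by rewrite sinDpi].
Qed.
Definition symR (R : realType) (p q t : R) : 'M[R]_2 :=
  \matrix_(i < 2, j < 2) if i == j then (if i == 0 then p else t) else q.

Lemma psd_sym (R : realType) (p q t : R) : 0 <= p -> 0 <= t -> q^+2 <= p*t ->
  psd (cmx (symR p q t)).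
Proof.
move=> hp ht hq v.
rewrite !mxE !big_ord_recl !big_ord0 /= !mxE !big_ord_recl !big_ord0 /= !mxE /=.
case: (v ord0 0) => a b; case: (v (lift ord0 ord0) 0) => c d.
rewrite lecE /=.
apply/andP; split.
  apply/eqP; ring.
have key : 0 <= p * (a ^+ 2 + b ^+ 2) + 2 * q * (a * c + b * d) + t * (c ^+ 2 + d ^+ 2).
  have [p0|pp] := eqVneq p 0.
    have q0 : q = 0.
      by apply/eqP; rewrite -sqrf_eq0 eq_le sqr_ge0 andbT; move: hq; rewrite p0 mul0r.
    rewrite p0 q0; nra.
  have pp' : 0 < p by rewrite lt_def pp hp.
  rewrite -(pmulr_rge0 _ pp').
  have -> : p * (p * (a ^+ 2 + b ^+ 2) + 2 * q * (a * c + b * d) + t * (c ^+ 2 + d ^+ 2))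
    = (p*a + q*c)^+2 + (p*b+q*d)^+2 + (p*t - q^+2) * (c^+2+d^+2) by ring.
  have h : 0 <= p*t - q^+2 by rewrite subr_ge0.
  by rewrite !addr_ge0 ?sqr_ge0 // mulr_ge0 // addr_ge0 ?sqr_ge0.
apply: (le_trans key); rewrite le_eqVlt; apply/orP; left; apply/eqP; ring.
Qed.

Lemma cmxM (R : realType) m n p (A : 'M[R]_(m, n)) (B : 'M[R]_(n, p)) :
  cmx (A *m B) = cmx A *m cmx B.
Proof. exact: (map_mxM (real_complex R)). Qed.
Lemma cmxD (R : realType) m n (A B : 'M[R]_(m, n)) : cmx (A + B) = cmx A + cmx B.
Proof. exact: (map_mxD (real_complex R)). Qed.
Lemma cmx1 (R : realType) n : cmx (1%:M : 'M[R]_n) = 1%:M.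
Proof. exact: (map_mx1 (real_complex R)). Qed.
Lemma cmxZ (R : realType) m n (a : R) (A : 'M[R]_(m, n)) : cmx (a *: A) = a%:C *: cmx A.
Proof. exact: (map_mxZ (real_complex R)). Qed.
Lemma cmx_adj (R : realType) m n (A : 'M[R]_(m, n)) : adj (cmx A) = cmx A^T.
Proof. apply/matrixP => i j; rewrite !mxE; exact: conjc_real. Qed.
Lemma cmx_sum (R : realType) m n (I : finType) (F : I -> 'M[R]_(m, n)) :
  cmx (\sum_i F i) = \sum_i cmx (F i).
Proof. exact: (map_mx_sum (real_complex R)). Qed.

Definition kpR (R : realType) : 'cV[R]_2 := \col_(i < 2) (if i == 0 then 1 else 0).
Definition kmR (R : realType) : 'cV[R]_2 := \col_(i < 2) (if i == 0 then 0 else 1).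
Lemma ketpE (R : realType) : ketp R = cmx (kpR R).
Proof. by apply/matrixP => i j; rewrite !mxE; case: ifP. Qed.
Lemma ketmE (R : realType) : ketm R = cmx (kmR R).
Proof. by apply/matrixP => i j; rewrite !mxE; case: ifP. Qed.

Definition Bl (R : realType) (a z x : R) := symR (a + z) x (a - z).
Definition nz (R : realType) (k : 'I_3) : R := if (k : nat) == 0%N then 1 else -1/2.
Definition nx (R : realType) (k : 'I_3) : R :=
  if (k : nat) == 0%N then 0 else if (k : nat) == 1%N then - r3 R else r3 R.

Lemma Elam_Bl (R : realType) (lam : R) k :
  Elam lam k = cmx (Bl (1/3) (lam/3 * nz R k) (lam/3 * nx R k)).
Proof.
rewrite /Elam /U ketpE !cmx_adj -!cmxM -cmx1 -!cmxZ -cmxD; congr cmx.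
have [hc hs] := cs_vals R k; have h3 := r3_sq R.
apply/matrixP => i j; rewrite !mxE !big_ord_recl !big_ord0 !mxE /=.
rewrite !big_ord_recl !big_ord0 !mxE /= !big_ord_recl !big_ord0 !mxE /=.
rewrite hc hs. have h4 : lam * r3 R ^+ 2 = lam * (3/4) by rewrite h3.
case: k hc hs => [[|[|[|//]]] Hk] hc hs; rewrite /ck /sk /nz /nx /=;
case: i => [[|[|//]] Hi]; case: j => [[|[|//]] Hj]; rewrite /=.
all: lra.
Qed.

Lemma Beta_Bl (R : realType) (eta : R) k :
  Beta eta k = cmx (Bl (1/3) (- (eta/3) * nz R k) (- (eta/3) * nx R k)).
Proof.
rewrite /Beta /B0 /U ketmE !cmx_adj -!cmxM -cmx1 -!cmxZ -cmxD -!cmxM; congr cmx.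
have [hc hs] := cs_vals R k; have h3 := r3_sq R.
apply/matrixP => i j; rewrite !mxE !big_ord_recl !big_ord0 !mxE /=.
rewrite !big_ord_recl !big_ord0 !mxE /= !big_ord_recl !big_ord0 !mxE /=.
rewrite hc hs. have h4 : eta * r3 R ^+ 2 = eta * (3/4) by rewrite h3.
case: k hc hs => [[|[|[|//]]] Hk] hc hs; rewrite /ck /sk /nz /nx /=;
case: i => [[|[|//]] Hi]; case: j => [[|[|//]] Hj]; rewrite /=.
all: lra.
Qed.

Lemma sum3 (V : zmodType) (F : 'I_3 -> V) :
  \sum_(j < 3) F j = F (@Ordinal 3 0 isT) + F (@Ordinal 3 1 isT) + F (@Ordinal 3 2 isT).
Proof.
rewrite !big_ord_recl big_ord0 addr0 addrA; congr (_ + _ + _); congr F; exact: val_inj.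
Qed.

Lemma Bl_add (R : realType) (a z x a' z' x' : R) :
  Bl a z x + Bl a' z' x' = Bl (a + a') (z + z') (x + x').
Proof.
apply/matrixP => i j; rewrite !mxE.
case: i => [[|[|//]] Hi]; case: j => [[|[|//]] Hj]; rewrite /=; lra.
Qed.

Lemma Bl_conv (R : realType) (t u a z x a' z' x' : R) :
  Bl (t * a + u * a') (t * z + u * z') (t * x + u * x') = t *: Bl a z x + u *: Bl a' z' x'.
Proof.
apply/matrixP => i j; rewrite !mxE.
case: i => [[|[|//]] Hi]; case: j => [[|[|//]] Hj]; rewrite /=; lra.
Qed.

Lemma Bl_1 (R : realType) : Bl 1 0 0 = 1%:M :> 'M[R]_2.
Proof.
apply/matrixP => i j; rewrite !mxE.
case: i => [[|[|//]] Hi]; case: j => [[|[|//]] Hj]; rewrite /=; lra.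
Qed.

Lemma psd_conv (R : realType) (A B : 'M[R[i]]_2) (t u : R) :
  psd A -> psd B -> 0 <= t -> 0 <= u -> psd (t%:C *: A + u%:C *: B).
Proof.
move=> hA hB ht hu v.
rewrite mulmxDr mulmxDl -!scalemxAr -!scalemxAl mxE.
have e : forall (M : 'M[R[i]]_1) c, (c *: M) 0 0 = c * M 0 0 by move=> M c; rewrite mxE.
rewrite !e.
apply: addr_ge0; apply: mulr_ge0 => //; by rewrite lecE /= eqxx.
Qed.

Lemma psd_Bl (R : realType) (a z x : R) : 0 <= a -> z^+2 + x^+2 <= a^+2 -> psd (cmx (Bl a z x)).
Proof.
move=> ha h; apply: psd_sym.
- nra.
- nra.
- nra.
Qed.

Lemma nn1 (R : realType) k : nz R k ^+ 2 + nx R k ^+ 2 = 1.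
Proof.
have h3 := r3_sq R.
case: k => [[|[|[|//]]] Hk]; rewrite /nz /nx /=; lra.
Qed.

Lemma nn2 (R : realType) (k j : 'I_3) : (k : nat) != j -> nz R k * nz R j + nx R k * nx R j = -1/2.
Proof.
have h3 := r3_sq R.
case: k => [[|[|[|//]]] Hk]; case: j => [[|[|[|//]]] Hj]; rewrite /nz /nx /= //; lra.
Qed.

Lemma norm_pair (R : realType) (x y z1 x1 z2 x2 : R) :
  z1^+2 + x1^+2 = 1 -> z2^+2 + x2^+2 = 1 -> z1*z2 + x1*x2 = -1/2 ->
  (x*z1+y*z2)^+2 + (x*x1+y*x2)^+2 = x^+2+y^+2-x*y.
Proof.
move=> h1 h2 h12.
have -> : (x*z1+y*z2)^+2 + (x*x1+y*x2)^+2
  = x^+2 * (z1^+2 + x1^+2) + y^+2 * (z2^+2+x2^+2) + 2*x*y*(z1*z2 + x1*x2) by ring.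
rewrite h1 h2 h12; lra.
Qed.

Definition xc (R : realType) (lam es al : R) : R := (2*lam + 3*al - es)/9.
Definition yc (R : realType) (lam es al : R) : R := (lam + 3*al - 2*es)/9.
Definition ac (R : realType) (al : R) : R := (1 - al)/6.
Definition nsA (R : realType) (lam es al : R) (k j : 'I_3) : R :=
  if (k : nat) == j then al/3 else ac al.
Definition nsZ (R : realType) (lam es al : R) (k j : 'I_3) : R :=
  if (k : nat) == j then -(al/3) * nz R k else xc lam es al * nz R k + yc lam es al * nz R j.
Definition nsX (R : realType) (lam es al : R) (k j : 'I_3) : R :=
  if (k : nat) == j then -(al/3) * nx R k else xc lam es al * nx R k + yc lam es al * nx R j.
Definition NRr (R : realType) (lam es al t : R) (k j : 'I_3) : 'M[R]_2 :=
  Bl (t * nsA lam es al k j + (1-t) * (1/9)) (t * nsZ lam es al k j + (1-t) * (lam/9 * nz R k))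
     (t * nsX lam es al k j + (1-t) * (lam/9 * nx R k)).

Lemma core (R : realType) (lam es al t : R) :
  -1 <= lam <= 1 -> 0 <= al <= 1 -> 0 <= t <= 1 ->
  (xc lam es al)^+2 + (yc lam es al)^+2 - xc lam es al * yc lam es al <= (ac al)^+2 ->
  jointly_measurable (Elam lam) (Beta (t * es)).
Proof.
move=> /andP [hl1 hl2] /andP [ha1 ha2] /andP [ht1 ht2] hkey.
have m1 : forall k, \sum_j cmx (NRr lam es al t k j) = Elam lam k.
  move=> k; rewrite Elam_Bl -cmx_sum sum3 !Bl_add; congr cmx.
  rewrite /NRr /nsA /nsZ /nsX /xc /yc /ac.
  by case: k => [[|[|[|//]]] Hk]; rewrite /nz /nx /=; congr Bl; lra.
have m2 : forall j, \sum_k cmx (NRr lam es al t k j) = Beta (t * es) j.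
  move=> j; rewrite Beta_Bl -cmx_sum sum3 !Bl_add; congr cmx.
  rewrite /NRr /nsA /nsZ /nsX /xc /yc /ac.
  by case: j => [[|[|[|//]]] Hj]; rewrite /nz /nx /=; congr Bl; lra.
exists (fun kj => cmx (NRr lam es al t kj.1 kj.2)); split; last by split.
split.
  move=> [k j] /=; rewrite /NRr Bl_conv cmxD !cmxZ.
  apply: psd_conv; last 2 first.
  - by [].
  - lra.
  - apply: psd_Bl; rewrite /nsA /nsZ /nsX; case: eqP => hkj.
    + lra.
    + rewrite /ac; lra.
    + rewrite !exprMn -mulrDr nn1 mulr1; lra.
    + rewrite (norm_pair _ _ (nn1 R k) (nn1 R j)); first by [].
      by apply: nn2; apply/eqP.
  - apply: psd_Bl; first lra.
    rewrite !exprMn -mulrDr nn1 mulr1; nra.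
rewrite -(pair_big xpredT xpredT (fun k j => cmx (NRr lam es al t k j))) /=.
rewrite (eq_bigr (fun k => Elam lam k)); last by move=> k _; exact: m1.
under eq_bigr do rewrite Elam_Bl.
rewrite -cmx_sum sum3 !Bl_add -cmx1 -Bl_1; congr cmx; rewrite /nz /nx /=; congr Bl; lra.
Qed.

Lemma main1 (R : realType) (lam eta : R) : 0 < lam < 1 -> 0 <= eta <= 1 ->
  eta <= (1 + Num.sqrt (1 - lam ^+ 2)) / 2 ->
  jointly_measurable (Elam lam) (Beta eta).
Proof.
move=> /andP [hl1 hl2] /andP [he1 he2] hle.
set s := Num.sqrt (1 - lam ^+ 2) in hle.
have s0 : 0 <= s by apply: sqrtr_ge0.
have s2 : s ^+ 2 = 1 - lam ^+ 2 by rewrite sqr_sqrtr //; nra.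
have s1 : s <= 1 by nra.
set es := (1 + s) / 2 in hle.
have es0 : 0 < es by rewrite /es; lra.
have e : eta / es * es = eta by rewrite divfK //; rewrite gt_eqF.
rewrite -e.
have hal : exists al : R, 0 <= al <= 1 /\
   (xc lam es al)^+2 + (yc lam es al)^+2 - xc lam es al * yc lam es al <= (ac al)^+2.
  rewrite /xc /yc /ac /es.
  have [h|h] := lerP (2 * lam) s.
    exists ((s - 2 * lam) / 3); split; first by apply/andP; split; lra.
    nra.
  exists 0; split; first by apply/andP; split; lra.
  nra.
have [al [hal1 hal2]] := hal.
apply: (@core R lam es al (eta / es)) => //.
- apply/andP; split; lra.
- apply/andP; split.
    by apply: divr_ge0 => //; apply: ltW.
  rewrite ler_pdivrMr //; lra.
Qed.

Theorem mainTheorem5 (R : realType) :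
  (forall lam eta : R, 0 < lam < 1 -> 0 <= eta <= 1 ->
     eta <= lam ^+ 2 / (2 * (1 - Num.sqrt (1 - lam ^+ 2))) ->
     jointly_measurable (Elam lam) (Beta eta)) /\
  (forall lam : R, 0 < lam < 1 -> lam <= 4 / 5 ->
     jointly_measurable (Elam lam) (Beta lam)).
Proof.
have bnd : forall lam : R, 0 < lam < 1 ->
    lam ^+ 2 / (2 * (1 - Num.sqrt (1 - lam ^+ 2))) = (1 + Num.sqrt (1 - lam ^+ 2)) / 2.
  move=> lam /andP [hl1 hl2].
  set s := Num.sqrt (1 - lam ^+ 2).
  have s0 : 0 <= s by apply: sqrtr_ge0.
  have s2 : s ^+ 2 = 1 - lam ^+ 2 by rewrite sqr_sqrtr //; nra.
  have s1 : s < 1 by nra.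
  have -> : lam ^+ 2 = (1 - s) * (1 + s) by lra.
  field; rewrite subr_eq0; apply/eqP => h; lra.
split.
  move=> lam eta hl he; rewrite bnd //; exact: main1.
move=> lam hl hl45; apply: main1 => //.
  by case/andP: hl => h1 h2; apply/andP; split; lra.
case/andP: hl => hl1 hl2.
set s := Num.sqrt (1 - lam ^+ 2).
have s0 : 0 <= s by apply: sqrtr_ge0.
have s2 : s ^+ 2 = 1 - lam ^+ 2 by rewrite sqr_sqrtr //; nra.
have : 3/5 <= s by nra.
lra.
Qed.
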